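(* Let $\Gamma$ be a strongly $\delta$-hyperbolic directed graph (real $\delta\ge0$). Then every directed geodesic triangle $T$ in $\Gamma$ can be tessellated by five directed geodesic triangles (some of which may be trivial triangles with a single vertex), each of size at most $\frac{3}{4}\Sigma(T)+2\delta+1$.
   Context: Directed graphs may have loops and multiple edges; $d(u,v)$ is the length of a shortest directed path from $u$ to $v$ ($\infty$ if none). Out-ball $\overrightarrow{\mathcal{B}}_r(x)=\{y : d(x,y)\le r\}$, in-ball $\overleftarrow{\mathcal{B}}_r(x)=\{y : d(y,x)\le r\}$, extended to sets by union. A path $[x_0,\dots,x_n]$ has length $n$ and is a geodesic if $n=d(x_0,x_n)$. Paths are composable if the end of the first is the start of the second ($\circ$ is concatenation) and parallel if they share start and end. A directed geodesic triangle is an ordered triple $(p,q,r)$ of geodesics with $p,q$ composable and $p\circ q$ parallel to $r$; its size is $\Sigma(p,q,r)=|p|+|q|$. It is $\delta$-thin if every vertex of $r$ lies in $\overrightarrow{\mathcal{B}}_\delta(p)\cup\overleftarrow{\mathcal{B}}_\delta(q)$, every vertex of $p$ lies in $\overrightarrow{\mathcal{B}}_\delta(r)\cup\overleftarrow{\mathcal{B}}_\delta(q)$, and every vertex of $q$ lies in $\overrightarrow{\mathcal{B}}_\delta(p)\cup\overleftarrow{\mathcal{B}}_\delta(r)$. A directed graph is strongly $\delta$-hyperbolic if all its directed geodesic triangles are $\delta$-thin. Tessellation: given directed geodesic triangles $T_i=(p_i,q_i,r_i)$, form the directed $2$-complex on $\Gamma$ with one $2$-cell per $T_i$ having top $p_i\circ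 q_i$ and bottom $r_i$ (plus its formal inverse swapping top and bottom). Parallel paths are homotopic if one can be transformed into the other by finitely many steps each replacing a subpath equal to the top of a $2$-cell by its bottom or vice versa. The $T_i$ tessellate parallel paths $p,q$ if $p,q$ are homotopic in this complex, and tessellate a triangle $(p,q,r)$ if they tessellate $p\circ q$ and $r$. *)

(* Defs.v *)
(* Directed graphs given by an adjacency relation on an arbitrary
   (possibly infinite) vertex type; paths are vertex sequences [x_0; ...; x_n]. *)
From Stdlib Require Export Reals List Relations.
Export ListNotations.
Open Scope R_scope.

Section Graph.
Variables (V : Type) (adj : V -> V -> Prop).

Inductive walk : list V -> Prop :=
| walk1 x : walk [x]
| walkS x y p : adj x y -> walk (y :: p) -> walk (x :: y :: p).

Definition plen (p : list V) : nat := (length p - 1)%nat.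
Definition pfirst (p : list V) (x : V) : Prop := exists t, p = x :: t.
Definition plast (p : list V) (x : V) : Prop := exists t, p = t ++ [x].

Definition dist_le (x y : V) (n : nat) : Prop :=
  exists p, walk p /\ pfirst p x /\ plast p y /\ (plen p <= n)%nat.
(* d(x,y) <= r for real r (false if d = infinity) *)
Definition dist_leR (x y : V) (r : R) : Prop :=
  exists n : nat, dist_le x y n /\ INR n <= r.

Definition geodesic (p : list V) : Prop :=
  walk p /\ forall x y q, pfirst p x -> plast p y ->
    walk q -> pfirst q x -> plast q y -> (plen p <= plen q)%nat.

Definition composable (p q : list V) : Prop :=
  exists x, plast p x /\ pfirst q x.
Definition parallel (p q : list V) : Prop :=
  exists x y, pfirst p x /\ pfirst q x /\ plast p y /\ plast q y.
Definition pconcat (p q : list V) : list V := p ++ tl q.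

Definition geo_triangle (p q r : list V) : Prop :=
  geodesic p /\ geodesic q /\ geodesic r /\ composable p q /\
  parallel (pconcat p q) r.

Definition tsize (p q r : list V) : nat := (plen p + plen q)%nat.

Definition out_ball_set (d : R) (A : list V) (v : V) : Prop :=
  exists y, In y A /\ dist_leR y v d.
Definition in_ball_set (d : R) (A : list V) (v : V) : Prop :=
  exists y, In y A /\ dist_leR v y d.

Definition thin (d : R) (p q r : list V) : Prop :=
  (forall v, In v r -> out_ball_set d p v \/ in_ball_set d q v) /\
  (forall v, In v p -> out_ball_set d r v \/ in_ball_set d q v) /\
  (forall v, In v q -> out_ball_set d p v \/ in_ball_set d r v).

Definition strongly_hyperbolic (d : R) : Prop :=
  forall p q r, geo_triangle p q r -> thin d p q r.

(* elementary homotopy step in the directed 2-complex with one 2-cell per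
   triangle (top p o q, bottom r) and its formal inverse *)
Inductive hstep (Ts : list (list V * list V * list V)) : list V -> list V -> Prop :=
| hstep_down a b p q r : In (p, q, r) Ts ->
    hstep Ts (a ++ pconcat p q ++ b) (a ++ r ++ b)
| hstep_up a b p q r : In (p, q, r) Ts ->
    hstep Ts (a ++ r ++ b) (a ++ pconcat p q ++ b).

Definition homotopic (Ts : list (list V * list V * list V)) (w w' : list V) : Prop :=
  clos_refl_trans (list V) (hstep Ts) w w'.

Definition tessellates_triangle (Ts : list (list V * list V * list V))
  (p q r : list V) : Prop := homotopic Ts (pconcat p q) r.

End Graph.

Arguments walk {V} adj _.
Arguments dist_le {V} adj _ _ _.
Arguments dist_leR {V} adj _ _ _.
Arguments geodesic {V} adj _.
Arguments geo_triangle {V} adj _ _ _.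
Arguments thin {V} adj _ _ _ _.
Arguments strongly_hyperbolic {V} adj _.
Arguments tsize {V} _ _ _.
Arguments plen {V} _.
Arguments hstep {V} _ _ _.
Arguments homotopic {V} _ _ _.
Arguments tessellates_triangle {V} _ _ _ _.

(* Main.v *)
Require Import Defs.
From Stdlib Require Import Lia Lra Classical Arith.

Arguments pconcat {V} _ _.
Arguments pfirst {V} _ _.
Arguments plast {V} _ _.
Arguments composable {V} _ _.
Arguments parallel {V} _ _.
Arguments out_ball_set {V} _ _ _ _.
Arguments in_ball_set {V} _ _ _ _.

Lemma walk_nn {V} (adj : V -> V -> Prop) p : walk adj p -> p <> [].
Proof. intros H; inversion H; discriminate. Qed.

Lemma pfirst_nn {V} (p : list V) x : pfirst p x -> p <> [].
Proof. intros [t ->]; discriminate. Qed.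

Lemma plast_nn {V} (p : list V) x : plast p x -> p <> [].
Proof. intros [t ->]; destruct t; discriminate. Qed.

Lemma pfirst_uniq {V} (p : list V) x y : pfirst p x -> pfirst p y -> x = y.
Proof. intros [t ->] [s H]; inversion H; auto. Qed.

Lemma plast_uniq {V} (p : list V) x y : plast p x -> plast p y -> x = y.
Proof. intros [t ->] [s H]. apply app_inj_tail in H. destruct H; auto. Qed.

Lemma plast_ex {V} (p : list V) : p <> [] -> exists x, plast p x.
Proof. intros H. destruct (exists_last H) as [l [a ->]]. exists a, l; auto. Qed.

Lemma pfirst_ex {V} (p : list V) : p <> [] -> exists x, pfirst p x.
Proof. destruct p as [|x t]; [congruence|]. intros _; exists x, t; auto. Qed.

Lemma plen_pconcat {V} (P Q : list V) : P <> [] -> Q <> [] ->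
  plen (pconcat P Q) = (plen P + plen Q)%nat.
Proof.
  intros HP HQ. unfold plen, pconcat. destruct Q as [|y Q]; [congruence|].
  destruct P as [|x P]; [congruence|]. simpl. rewrite length_app. lia.
Qed.

Lemma pfirst_pconcat {V} (P Q : list V) x : pfirst P x -> pfirst (pconcat P Q) x.
Proof. intros [t ->]. exists (t ++ tl Q). reflexivity. Qed.

Lemma pfirst_pconcat_inv {V} (P Q : list V) x : P <> [] -> pfirst (pconcat P Q) x -> pfirst P x.
Proof.
  intros HP [t Ht]. destruct P as [|y P]; [congruence|]. unfold pconcat in Ht.
  simpl in Ht. inversion Ht; subst. exists P; auto.
Qed.

Lemma plast_pconcat {V} (P Q : list V) v z : plast P v -> pfirst Q v -> plast Q z ->
  plast (pconcat P Q) z.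
Proof.
  intros [A ->] [B ->] [C HC]. exists (A ++ C). unfold pconcat. simpl.
  rewrite <- app_assoc. simpl. rewrite HC. rewrite app_assoc. reflexivity.
Qed.

Lemma plast_app_inv {V} (A L : list V) z : L <> [] -> plast (A ++ L) z -> plast L z.
Proof.
  intros HL [t Ht]. destruct (exists_last HL) as [l [a ->]].
  rewrite app_assoc in Ht. apply app_inj_tail in Ht. destruct Ht as [_ ->]. exists l; auto.
Qed.

Lemma plast_pconcat_inv {V} (P Q : list V) v z : plast P v -> pfirst Q v ->
  plast (pconcat P Q) z -> plast Q z.
Proof.
  intros HP [B ->] H. unfold pconcat in H. simpl in H. destruct B as [|b B].
  - rewrite app_nil_r in H. rewrite (plast_uniq _ _ _ H HP). exists []; auto.
  - apply plast_app_inv in H; [|discriminate]. destruct H as [t Ht].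
    exists (v :: t). rewrite Ht. reflexivity.
Qed.

Lemma walk_app {V} (adj : V -> V -> Prop) A : forall v B,
  walk adj (A ++ [v]) -> walk adj (v :: B) -> walk adj (A ++ v :: B).
Proof.
  induction A as [|a A IH]; intros v B H1 H2; simpl in *; auto.
  destruct A as [|a' A]; simpl in *.
  - inversion H1; subst. constructor; auto.
  - inversion H1; subst. constructor; auto.
Qed.

Lemma walk_split {V} (adj : V -> V -> Prop) A : forall v B,
  walk adj (A ++ v :: B) -> walk adj (A ++ [v]) /\ walk adj (v :: B).
Proof.
  induction A as [|a A IH]; intros v B H; simpl in *.
  - split; auto. constructor.
  - destruct A as [|a' A]; simpl in *.
    + inversion H; subst. split; auto. constructor; auto. constructor.
    + inversion H; subst. destruct (IH v B H4) as [K1 K2]. split; auto. constructor; auto.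
Qed.

Lemma walk_pconcat {V} (adj : V -> V -> Prop) P Q v : walk adj P -> walk adj Q ->
  plast P v -> pfirst Q v -> walk adj (pconcat P Q).
Proof.
  intros HP HQ [A ->] [B ->]. unfold pconcat; simpl. rewrite <- app_assoc. simpl.
  apply walk_app; auto.
Qed.

Lemma walk_pconcat_inv {V} (adj : V -> V -> Prop) P Q v : walk adj (pconcat P Q) ->
  plast P v -> pfirst Q v -> walk adj P /\ walk adj Q.
Proof.
  intros H [A ->] [B ->]. unfold pconcat in H; simpl in H. rewrite <- app_assoc in H.
  simpl in H. apply walk_split; auto.
Qed.

Definition pth {V} (adj : V -> V -> Prop) (P : list V) x y :=
  walk adj P /\ pfirst P x /\ plast P y.
Definition seg {V} (adj : V -> V -> Prop) (P : list V) x y :=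
  geodesic adj P /\ pfirst P x /\ plast P y.

Lemma pth_concat {V} (adj : V -> V -> Prop) P Q x y z :
  pth adj P x y -> pth adj Q y z -> pth adj (pconcat P Q) x z.
Proof.
  intros (H1&H2&H3) (H4&H5&H6). split; [|split].
  - eapply walk_pconcat; eauto.
  - apply pfirst_pconcat; auto.
  - eapply plast_pconcat; eauto.
Qed.

Lemma seg_pth {V} (adj : V -> V -> Prop) P x y : seg adj P x y -> pth adj P x y.
Proof. intros ((H&_)&H2&H3); repeat split; auto. Qed.

Lemma seg_min {V} (adj : V -> V -> Prop) P Q x y : seg adj P x y -> pth adj Q x y ->
  (plen P <= plen Q)%nat.
Proof. intros ((_&H)&H2&H3) (H4&H5&H6). eapply H; eauto. Qed.

Lemma geo_split {V} (adj : V -> V -> Prop) P1 P2 x v z :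
  seg adj (pconcat P1 P2) x z -> plast P1 v -> pfirst P2 v ->
  seg adj P1 x v /\ seg adj P2 v z.
Proof.
  intros Hs H1 H2. destruct Hs as [[Hw Hm] [Hx Hz]].
  destruct (walk_pconcat_inv adj _ _ _ Hw H1 H2) as [W1 W2].
  assert (N1 := plast_nn _ _ H1). assert (N2 := pfirst_nn _ _ H2).
  assert (Hx1 : pfirst P1 x) by (eapply pfirst_pconcat_inv; eauto).
  assert (Hz2 : plast P2 z) by (eapply plast_pconcat_inv; eauto).
  split; split; try split; auto.
  - intros x' y' q Ha Hb Hq Hc Hd.
    rewrite (pfirst_uniq _ _ _ Ha Hx1) in *. rewrite (plast_uniq _ _ _ Hb H1) in *.
    assert (HW : pth adj (pconcat q P2) x z) by (apply (pth_concat _ _ _ _ v); repeat split; auto).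
    destruct HW as (A1&A2&A3).
    specialize (Hm x z _ Hx Hz A1 A2 A3).
    rewrite !plen_pconcat in Hm; auto; [lia| eapply walk_nn; eauto].
  - intros x' y' q Ha Hb Hq Hc Hd.
    rewrite (pfirst_uniq _ _ _ Ha H2) in *. rewrite (plast_uniq _ _ _ Hb Hz2) in *.
    assert (HW : pth adj (pconcat P1 q) x z) by (apply (pth_concat _ _ _ _ v); repeat split; auto).
    destruct HW as (A1&A2&A3).
    specialize (Hm x z _ Hx Hz A1 A2 A3).
    rewrite !plen_pconcat in Hm; auto; [lia| eapply walk_nn; eauto].
Qed.

Lemma geo_exists {V} (adj : V -> V -> Prop) : forall n w x y, pth adj w x y ->
  (plen w <= n)%nat -> exists g, seg adj g x y /\ (plen g <= plen w)%nat.
Proof.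
  induction n as [|n IH]; intros w x y Hw Hn;
  (destruct (classic (exists w', pth adj w' x y /\ (plen w' < plen w)%nat)) as [[w' [H1 H2]]|Hno];
   [ | exists w; split; [|lia]; destruct Hw as (W1&W2&W3); split; [split|split]; auto;
       intros x' y' q Ha Hb Hq Hc Hd;
       rewrite (pfirst_uniq _ _ _ Ha W2) in *; rewrite (plast_uniq _ _ _ Hb W3) in *;
       destruct (le_lt_dec (plen w) (plen q)); auto; exfalso; apply Hno; exists q; repeat split; auto ]).
  - lia.
  - destruct (IH w' x y H1 ltac:(lia)) as [g [G1 G2]]. exists g; split; auto; lia.
Qed.

Lemma geo_of_pth {V} (adj : V -> V -> Prop) w x y : pth adj w x y ->
  exists g, seg adj g x y /\ (plen g <= plen w)%nat.
Proof. intros H; eapply geo_exists; eauto. Qed.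

Lemma dist_geo {V} (adj : V -> V -> Prop) x y d : dist_leR adj x y d ->
  exists g, seg adj g x y /\ INR (plen g) <= d.
Proof.
  intros [n [[p (H1&H2&H3&H4)] Hn]].
  destruct (geo_of_pth adj p x y) as [g [G1 G2]]; [repeat split; auto|].
  exists g; split; auto. apply Rle_trans with (INR n); auto. apply le_INR; lia.
Qed.

Lemma split_idx {V} k : forall (p : list V), p <> [] -> (k <= plen p)%nat ->
  exists P1 P2 v, p = pconcat P1 P2 /\ plast P1 v /\ pfirst P2 v /\ plen P1 = k /\
    plen P2 = (plen p - k)%nat.
Proof.
  induction k as [|k IH]; intros p Hp Hk.
  - destruct p as [|x t]; [congruence|]. exists [x], (x :: t), x.
    repeat split; auto. exists []; auto. exists t; auto. unfold plen; simpl; lia.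
  - destruct p as [|x p']; [congruence|]. destruct p' as [|x' t].
    + unfold plen in Hk; simpl in Hk; lia.
    + destruct (IH (x' :: t)) as [P1 [P2 [v (E&L1&F2&N1&N2)]]]; [discriminate| unfold plen in *; simpl in *; lia|].
      exists (x :: P1), P2, v. destruct L1 as [s Hs]. subst P1.
      repeat split.
      * rewrite E. reflexivity.
      * exists (x :: s); reflexivity.
      * auto.
      * unfold plen in *. simpl. rewrite length_app in *. simpl in *. lia.
      * unfold plen in *. simpl in *. lia.
Qed.

Lemma split_in {V} (p : list V) v : In v p ->
  exists P1 P2, p = pconcat P1 P2 /\ plast P1 v /\ pfirst P2 v.
Proof.
  intros H. destruct (in_split v p H) as [l1 [l2 ->]]. exists (l1 ++ [v]), (v :: l2).
  split; [|split].
  - unfold pconcat; simpl. rewrite <- app_assoc. reflexivity.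
  - exists l1; auto.
  - exists l2; auto.
Qed.

Lemma in_last {V} (P : list V) v : plast P v -> In v P.
Proof. intros [t ->]. apply in_or_app; right; left; auto. Qed.

Lemma in_pconcat_l {V} (P Q : list V) v : In v P -> In v (pconcat P Q).
Proof. intros H. unfold pconcat. apply in_or_app; auto. Qed.

Lemma pc_assoc {V} (P Q R : list V) : Q <> [] ->
  pconcat (pconcat P Q) R = pconcat P (pconcat Q R).
Proof.
  intros HQ. destruct Q as [|y Q]; [congruence|]. unfold pconcat; simpl.
  rewrite <- app_assoc. reflexivity.
Qed.

Lemma pc_l1 {V} (W : list V) x : pfirst W x -> pconcat [x] W = W.
Proof. intros [t ->]. reflexivity. Qed.

Lemma pc_r1 {V} (W : list V) z : pconcat W [z] = W.
Proof. unfold pconcat; simpl. apply app_nil_r. Qed.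

Lemma hom_down {V} Ts (P Q R X Y : list V) x0 : In (P,Q,R) Ts -> pfirst P x0 ->
  pfirst R x0 -> plast X x0 ->
  homotopic Ts (pconcat (pconcat X (pconcat P Q)) Y) (pconcat (pconcat X R) Y).
Proof.
  intros HI [P' ->] [R' ->] [X' ->].
  pose proof (hstep_down _ Ts X' (tl Y) (x0 :: P') Q (x0 :: R') HI) as Hs.
  unfold homotopic. apply rt_step.
  unfold pconcat in *; simpl in *. rewrite <- !app_assoc in *. simpl in *. exact Hs.
Qed.

Lemma hom_up {V} Ts (P Q R X Y : list V) x0 : In (P,Q,R) Ts -> pfirst P x0 ->
  pfirst R x0 -> plast X x0 ->
  homotopic Ts (pconcat (pconcat X R) Y) (pconcat (pconcat X (pconcat P Q)) Y).
Proof.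
  intros HI [P' ->] [R' ->] [X' ->].
  pose proof (hstep_up _ Ts X' (tl Y) (x0 :: P') Q (x0 :: R') HI) as Hs.
  unfold homotopic. apply rt_step.
  unfold pconcat in *; simpl in *. rewrite <- !app_assoc in *. simpl in *. exact Hs.
Qed.

Lemma hom_trans {V} Ts (a b c : list V) : homotopic Ts a b -> homotopic Ts b c -> homotopic Ts a c.
Proof. intros; eapply rt_trans; eauto. Qed.

Lemma seg_tri {V} (adj : V -> V -> Prop) P Q R x y z :
  seg adj P x y -> seg adj Q y z -> seg adj R x z -> geo_triangle adj P Q R.
Proof.
  intros (H1&H2&H3) (H4&H5&H6) (H7&H8&H9). split; [|split; [|split; [|split]]]; auto.
  - exists y; split; auto.
  - exists x, z. split; [|split; [|split]]; auto. apply pfirst_pconcat; auto. eapply plast_pconcat; eauto.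
Qed.

Lemma hom_TT {V} (adj : V -> V -> Prop) Ts x y z v w r P1 P2 Q1 Q2 g G :
  seg adj P1 x v -> seg adj P2 v y -> seg adj Q1 y w -> seg adj Q2 w z ->
  seg adj g v w -> seg adj G x w -> seg adj r x z ->
  In (P2,Q1,g) Ts -> In (P1,g,G) Ts -> In (G,Q2,r) Ts ->
  homotopic Ts (pconcat (pconcat P1 P2) (pconcat Q1 Q2)) r.
Proof.
  intros (_&a1&a2) (_&b1&b2) (_&c1&c2) (_&d1&d2) (_&e1&e2) (_&f1&f2) (_&h1&h2) I1 I2 I3.
  assert (S1: homotopic Ts (pconcat (pconcat P1 (pconcat P2 Q1)) Q2) (pconcat (pconcat P1 g) Q2))
    by (apply (hom_down Ts P2 Q1 g P1 Q2 v); auto).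
  assert (S2: homotopic Ts (pconcat (pconcat [x] (pconcat P1 g)) Q2) (pconcat (pconcat [x] G) Q2))
    by (apply (hom_down Ts P1 g G [x] Q2 x); auto; exists []; auto).
  assert (S3: homotopic Ts (pconcat (pconcat [x] (pconcat G Q2)) [z]) (pconcat (pconcat [x] r) [z]))
    by (apply (hom_down Ts G Q2 r [x] [z] x); auto; exists []; auto).
  rewrite !pc_l1 in S3 by (try apply pfirst_pconcat; auto). rewrite !pc_r1 in S3.
  rewrite !pc_l1 in S2 by (try apply pfirst_pconcat; auto).
  rewrite (pc_assoc P1 P2) by (eapply pfirst_nn; eauto).
  rewrite <- (pc_assoc P2 Q1 Q2) by (eapply pfirst_nn; eauto).
  rewrite <- (pc_assoc P1 (pconcat P2 Q1) Q2) by (apply (pfirst_nn _ v), pfirst_pconcat; auto).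
  eapply hom_trans; [exact S1|]. eapply hom_trans; [exact S2|]. exact S3.
Qed.

Lemma hom_Pin {V} (adj : V -> V -> Prop) Ts x y z v u q P1 P2 R1 R2 h G :
  seg adj P1 x v -> seg adj P2 v y -> seg adj q y z -> seg adj R1 x u -> seg adj R2 u z ->
  seg adj h u v -> seg adj G u y ->
  In (R1,h,P1) Ts -> In (h,P2,G) Ts -> In (G,q,R2) Ts ->
  homotopic Ts (pconcat (pconcat P1 P2) q) (pconcat R1 R2).
Proof.
  intros (_&a1&a2) (_&b1&b2) (_&c1&c2) (_&d1&d2) (_&e1&e2) (_&f1&f2) (_&g1&g2) I1 I2 I3.
  assert (S1: homotopic Ts (pconcat (pconcat [x] P1) (pconcat P2 q))
                           (pconcat (pconcat [x] (pconcat R1 h)) (pconcat P2 q)))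
    by (apply (hom_up Ts R1 h P1 [x] _ x); auto; exists []; auto).
  assert (S2: homotopic Ts (pconcat (pconcat R1 (pconcat h P2)) q) (pconcat (pconcat R1 G) q))
    by (apply (hom_down Ts h P2 G R1 q u); auto).
  assert (S3: homotopic Ts (pconcat (pconcat R1 (pconcat G q)) [z]) (pconcat (pconcat R1 R2) [z]))
    by (apply (hom_down Ts G q R2 R1 [z] u); auto).
  rewrite !pc_r1 in S3. rewrite !pc_l1 in S1 by (try apply pfirst_pconcat; auto).
  rewrite (pc_assoc R1 h) in S1 by (eapply pfirst_nn; eauto).
  rewrite <- (pc_assoc h P2 q) in S1 by (eapply pfirst_nn; eauto).
  rewrite <- (pc_assoc R1 (pconcat h P2) q) in S1 by (apply (pfirst_nn _ u), pfirst_pconcat; auto).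
  rewrite (pc_assoc R1 G q) in S2 by (eapply pfirst_nn; eauto).
  rewrite (pc_assoc P1 P2 q) by (eapply pfirst_nn; eauto).
  eapply hom_trans; [exact S1|]. eapply hom_trans; [exact S2|]. exact S3.
Qed.

Lemma hom_RP {V} (adj : V -> V -> Prop) Ts x y z u m q P11 P' S1 R' g G :
  seg adj P11 x u -> seg adj P' u y -> seg adj q y z -> seg adj S1 x m -> seg adj R' m z ->
  seg adj g u m -> seg adj G u z ->
  In (P11,g,S1) Ts -> In (P',q,G) Ts -> In (g,R',G) Ts ->
  homotopic Ts (pconcat (pconcat P11 P') q) (pconcat S1 R').
Proof.
  intros (_&a1&a2) (_&b1&b2) (_&c1&c2) (_&d1&d2) (_&e1&e2) (_&f1&f2) (_&g1&g2) I1 I2 I3.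
  assert (K1: homotopic Ts (pconcat (pconcat P11 (pconcat P' q)) [z]) (pconcat (pconcat P11 G) [z]))
    by (apply (hom_down Ts P' q G P11 [z] u); auto).
  assert (K2: homotopic Ts (pconcat (pconcat P11 G) [z]) (pconcat (pconcat P11 (pconcat g R')) [z]))
    by (apply (hom_up Ts g R' G P11 [z] u); auto).
  assert (K3: homotopic Ts (pconcat (pconcat [x] (pconcat P11 g)) R') (pconcat (pconcat [x] S1) R'))
    by (apply (hom_down Ts P11 g S1 [x] R' x); auto; exists []; auto).
  rewrite !pc_r1 in K1, K2. rewrite !pc_l1 in K3 by (try apply pfirst_pconcat; auto).
  rewrite <- (pc_assoc P11 g R') in K2 by (eapply pfirst_nn; eauto).
  rewrite (pc_assoc P11 P' q) by (eapply pfirst_nn; eauto).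
  eapply hom_trans; [exact K1|]. eapply hom_trans; [exact K2|]. exact K3.
Qed.

Lemma half a : exists k, (k + k <= a /\ a <= k + k + 1)%nat.
Proof.
  induction a as [|a [k Hk]]; [exists 0%nat; lia|].
  destruct (Nat.eq_dec a (k+k)); [exists k; lia | exists (S k); lia].
Qed.

Lemma quarter s : exists J, (4 * J <= s /\ s <= 4 * J + 3)%nat.
Proof.
  destruct (half s) as [h Hh]. destruct (half h) as [J HJ]. exists J. lia.
Qed.

Lemma fb (s S L : nat) d : 0 <= d -> INR L <= 2 * d -> (4 * s <= 3 * S + 4 + 4 * L)%nat ->
  INR s <= 3 / 4 * INR S + 2 * d + 1.
Proof.
  intros H0 H1 H2. apply le_INR in H2. rewrite !plus_INR, !mult_INR in H2. simpl in H2. lra.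
Qed.

Lemma pack {V} (adj : V -> V -> Prop) (Bd : R) p q r a1 b1 c1 a2 b2 c2 a3 b3 c3 :
  geo_triangle adj a1 b1 c1 -> INR (tsize a1 b1 c1) <= Bd ->
  geo_triangle adj a2 b2 c2 -> INR (tsize a2 b2 c2) <= Bd ->
  geo_triangle adj a3 b3 c3 -> INR (tsize a3 b3 c3) <= Bd ->
  homotopic [(a1,b1,c1);(a2,b2,c2);(a3,b3,c3);(a1,b1,c1);(a1,b1,c1)] (pconcat p q) r ->
  exists Ts, length Ts = 5%nat /\
    (forall p' q' r', In (p', q', r') Ts -> geo_triangle adj p' q' r' /\ INR (tsize p' q' r') <= Bd) /\
    tessellates_triangle Ts p q r.
Proof.
  intros. exists [(a1,b1,c1);(a2,b2,c2);(a3,b3,c3);(a1,b1,c1);(a1,b1,c1)]; split; [reflexivity|split; [|exact H5]].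
  intros p' q' r' HI. simpl in HI.
  repeat destruct HI as [HI|HI]; try (inversion HI; subst; split; auto); contradiction.
Qed.

Lemma seg_nn {V} (adj : V -> V -> Prop) P x y : seg adj P x y -> P <> [].
Proof. intros (_&H&_). eapply pfirst_nn; eauto. Qed.

Lemma plen_split {V} (adj : V -> V -> Prop) P Q x v y : seg adj P x v -> seg adj Q v y ->
  plen (pconcat P Q) = (plen P + plen Q)%nat.
Proof. intros H1 H2. apply plen_pconcat; eapply seg_nn; eauto. Qed.

Lemma main_ab {V} (adj : V -> V -> Prop) d : 0 <= d -> strongly_hyperbolic adj d ->
  forall p q r, geo_triangle adj p q r -> (plen q <= plen p)%nat ->
  exists Ts, length Ts = 5%nat /\
    (forall p' q' r', In (p', q', r') Ts -> geo_triangle adj p' q' r' /\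
       INR (tsize p' q' r') <= 3 / 4 * INR (tsize p q r) + 2 * d + 1) /\
    tessellates_triangle Ts p q r.
Proof.
  intros Hd Hh p q r HT Hba.
  pose proof (Hh p q r HT) as Hthin.
  destruct HT as (Gp & Gq & Gr & [y [Hpy Hqy]] & [x [z (Hx1 & Hrx & Hz1 & Hrz)]]).
  assert (Np : p <> []) by (apply (walk_nn adj), (proj1 Gp)).
  assert (Hpx : pfirst p x) by (eapply pfirst_pconcat_inv; eauto).
  assert (Hqz : plast q z) by (apply (plast_pconcat_inv p q y z); auto).
  assert (sp : seg adj p x y) by (split; [|split]; auto).
  assert (sq : seg adj q y z) by (split; [|split]; auto).
  assert (sr : seg adj r x z) by (split; [|split]; auto).
  clear Gp Gq Gr Hx1 Hz1.
  assert (Hrle : (plen r <= plen p + plen q)%nat).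
  { rewrite <- (plen_split adj p q x y z) by auto. apply (seg_min adj r _ x z sr).
    apply (pth_concat adj p q x y z); apply seg_pth; auto. }
  unfold tsize at 2.
  destruct (half (plen p)) as [k Hk].
  destruct (split_idx k p Np ltac:(lia)) as [P1 [P2 [v (Ep & L1 & F2 & NP1 & NP2)]]].
  assert (sp' := sp). rewrite Ep in sp'.
  destruct (geo_split adj _ _ _ _ _ sp' L1 F2) as [sP1 sP2]. clear sp'.
  assert (Hv : In v p) by (rewrite Ep; apply in_pconcat_l, in_last; auto).
  destruct Hthin as [_ [Hth _]].
  destruct (Hth v Hv) as [[u [Hur Huv]] | [w [Hwq Hvw]]].
  2: {
    destruct (dist_geo adj _ _ _ Hvw) as [g [sg Lg]].
    destruct (split_in q w Hwq) as [Q1 [Q2 (Eq & LQ & FQ)]].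
    assert (sq' := sq). rewrite Eq in sq'.
    destruct (geo_split adj _ _ _ _ _ sq' LQ FQ) as [sQ1 sQ2]. clear sq'.
    destruct (geo_of_pth adj (pconcat P1 g) x w) as [G [sG HG]].
    { apply (pth_concat adj _ _ x v w); apply seg_pth; auto. }
    rewrite (plen_split adj P1 g x v w) in HG by auto.
    assert (Hq : plen q = (plen Q1 + plen Q2)%nat) by (rewrite Eq; eapply plen_split; eauto).
    apply (pack adj _ p q r P2 Q1 g P1 g G G Q2 r).
    - eapply seg_tri; eauto.
    - apply (fb _ _ 0); [auto| simpl; lra | unfold tsize; lia].
    - eapply seg_tri; eauto.
    - apply (fb _ _ (plen g)); [auto| lra | unfold tsize; lia].
    - eapply seg_tri; eauto.
    - apply (fb _ _ (plen g)); [auto| lra | unfold tsize; lia].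
    - unfold tessellates_triangle. rewrite Ep, Eq. eapply hom_TT; eauto; simpl; tauto. }
  destruct (dist_geo adj _ _ _ Huv) as [g [sg Lg]].
  destruct (split_in r u Hur) as [R1 [R2 (Er & LR & FR)]].
  assert (sr' := sr). rewrite Er in sr'.
  destruct (geo_split adj _ _ _ _ _ sr' LR FR) as [sR1 sR2]. clear sr'.
  assert (Hr : plen r = (plen R1 + plen R2)%nat) by (rewrite Er; eapply plen_split; eauto).
  destruct (quarter (plen p + plen q)) as [J HJ].
  destruct (le_lt_dec (plen R1) J) as [HRJ|HRJ].
  -
    destruct (geo_of_pth adj (pconcat g P2) u y) as [G [sG HG]].
    { apply (pth_concat adj _ _ u v y); apply seg_pth; auto. }
    rewrite (plen_split adj g P2 u v y) in HG by auto.
    apply (pack adj _ p q r R1 g P1 g P2 G G q R2).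
    + eapply seg_tri; eauto.
    + apply (fb _ _ (plen g)); [auto| lra | unfold tsize; lia].
    + eapply seg_tri; eauto.
    + apply (fb _ _ (plen g)); [auto| lra | unfold tsize; lia].
    + eapply seg_tri; eauto.
    + apply (fb _ _ (plen g)); [auto| lra | unfold tsize; lia].
    + unfold tessellates_triangle. rewrite Ep, Er at 1. eapply hom_Pin; eauto; simpl; tauto.
  - destruct (split_idx J R1 ltac:(eapply seg_nn; eauto) ltac:(lia))
      as [S1 [S2 [m (ER1 & LS & FS & NS1 & NS2)]]].
    assert (sR1' := sR1). rewrite ER1 in sR1'.
    destruct (geo_split adj _ _ _ _ _ sR1' LS FS) as [sS1 sS2]. clear sR1'.
    assert (Er' : r = pconcat S1 (pconcat S2 R2))
      by (rewrite Er, ER1; apply pc_assoc; eapply seg_nn; eauto).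
    assert (sr' := sr). rewrite Er' in sr'.
    destruct (geo_split adj _ _ _ _ _ sr' LS ltac:(apply pfirst_pconcat; auto)) as [_ sR'].
    clear sr'.
    assert (Hr' : plen r = (plen S1 + plen (pconcat S2 R2))%nat)
      by (rewrite Er' at 1; eapply plen_split; eauto).
    assert (tri1 : geo_triangle adj R1 g P1) by (eapply seg_tri; eauto).
    destruct (Hh _ _ _ tri1) as [_ [Hth1 _]].
    assert (Hm : In m R1) by (rewrite ER1; apply in_pconcat_l, in_last; auto).
    destruct (Hth1 m Hm) as [[u' [Hu'P Hu'm]] | [w [Hwg Hmw]]].
    +
      destruct (dist_geo adj _ _ _ Hu'm) as [g' [sg' Lg']].
      destruct (split_in P1 u' Hu'P) as [P11 [P12 (EP1 & LP & FP)]].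
      assert (sP1' := sP1). rewrite EP1 in sP1'.
      destruct (geo_split adj _ _ _ _ _ sP1' LP FP) as [sP11 sP12]. clear sP1'.
      assert (Ep' : p = pconcat P11 (pconcat P12 P2))
        by (rewrite Ep, EP1; apply pc_assoc; eapply seg_nn; eauto).
      assert (sp' := sp). rewrite Ep' in sp'.
      destruct (geo_split adj _ _ _ _ _ sp' LP ltac:(apply pfirst_pconcat; auto)) as [_ sP'].
      clear sp'.
      assert (Hp' : plen p = (plen P11 + plen (pconcat P12 P2))%nat)
        by (rewrite Ep' at 1; eapply plen_split; eauto).
      assert (HP1 : plen P1 = (plen P11 + plen P12)%nat) by (rewrite EP1; eapply plen_split; eauto).
      assert (HJk : (plen S1 <= plen P11 + plen g')%nat).
      { rewrite <- (plen_split adj P11 g' x u' m) by auto. apply (seg_min adj _ _ x m sS1).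
        apply (pth_concat adj _ _ x u' m); apply seg_pth; auto. }
      destruct (geo_of_pth adj (pconcat (pconcat P12 P2) q) u' z) as [G [sG HG]].
      { apply (pth_concat adj _ _ u' y z); apply seg_pth; auto. }
      apply (pack adj _ p q r P11 g' S1 (pconcat P12 P2) q G g' (pconcat S2 R2) G).
      * eapply seg_tri; eauto.
      * apply (fb _ _ (plen g')); [auto| lra | unfold tsize; lia].
      * eapply seg_tri; eauto.
      * apply (fb _ _ (plen g')); [auto| lra | unfold tsize; lia].
      * eapply seg_tri; eauto.
      * apply (fb _ _ (plen g')); [auto| lra | unfold tsize; lia].
      * unfold tessellates_triangle. rewrite Ep' at 1. rewrite Er' at 1.
        eapply hom_RP; eauto; simpl; tauto.
    +
      destruct (dist_geo adj _ _ _ Hmw) as [g'' [sg'' Lg'']].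
      destruct (split_in g w Hwg) as [g1 [g2 (Eg & Lw & Fw)]].
      assert (sg' := sg). rewrite Eg in sg'.
      destruct (geo_split adj _ _ _ _ _ sg' Lw Fw) as [sg1 sg2]. clear sg'.
      assert (Hg : plen g = (plen g1 + plen g2)%nat) by (rewrite Eg; eapply plen_split; eauto).
      destruct (geo_of_pth adj (pconcat g'' g2) m v) as [h [sh Hh']].
      { apply (pth_concat adj _ _ m w v); apply seg_pth; auto. }
      rewrite (plen_split adj g'' g2 m w v) in Hh' by auto.
      destruct (geo_of_pth adj (pconcat h P2) m y) as [G [sG HG]].
      { apply (pth_concat adj _ _ m v y); apply seg_pth; auto. }
      rewrite (plen_split adj h P2 m v y) in HG by auto.
      assert (HL : INR (plen g'' + plen g2) <= 2 * d).
      { rewrite plus_INR. assert (INR (plen g2) <= INR (plen g)) by (apply le_INR; lia). lra. }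
      apply (pack adj _ p q r S1 h P1 h P2 G G q (pconcat S2 R2)).
      * eapply seg_tri; eauto.
      * apply (fb _ _ (plen g'' + plen g2)); [auto| lra | unfold tsize; lia].
      * eapply seg_tri; eauto.
      * apply (fb _ _ (plen g'' + plen g2)); [auto| lra | unfold tsize; lia].
      * eapply seg_tri; eauto.
      * apply (fb _ _ (plen g'' + plen g2)); [auto| lra | unfold tsize; lia].
      * unfold tessellates_triangle. rewrite Ep at 1. rewrite Er' at 1.
        eapply hom_Pin; eauto; simpl; tauto.
Qed.

Definition fl {V} (adj : V -> V -> Prop) : V -> V -> Prop := fun x y => adj y x.

Lemma walk_snoc {V} (adj : V -> V -> Prop) A y x : walk adj A -> plast A y -> adj y x ->
  walk adj (A ++ [x]).
Proof.
  intros HA [A' ->] Hyx. rewrite <- app_assoc. simpl. apply walk_app; auto.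
  constructor; auto. constructor.
Qed.

Lemma rev_walk {V} (adj : V -> V -> Prop) p : walk adj p -> walk (fl adj) (rev p).
Proof.
  induction 1 as [x|x y p H1 H2 IH].
  - simpl. constructor.
  - change (rev (x :: y :: p)) with (rev (y :: p) ++ [x]).
    apply (walk_snoc _ _ y); auto. exists (rev p). reflexivity.
Qed.

Lemma fl_fl {V} (adj : V -> V -> Prop) : fl (fl adj) = adj.
Proof. reflexivity. Qed.

Lemma rev_walk' {V} (adj : V -> V -> Prop) p : walk (fl adj) p -> walk adj (rev p).
Proof. intros H. apply (rev_walk (fl adj)) in H. exact H. Qed.

Lemma pfirst_rev {V} (p : list V) x : plast p x -> pfirst (rev p) x.
Proof. intros [t ->]. rewrite rev_app_distr. simpl. exists (rev t); auto. Qed.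

Lemma plast_rev {V} (p : list V) x : pfirst p x -> plast (rev p) x.
Proof. intros [t ->]. simpl. exists (rev t); auto. Qed.

Lemma plen_rev {V} (p : list V) : plen (rev p) = plen p.
Proof. unfold plen. rewrite length_rev. auto. Qed.

Lemma pfirst_rev_inv {V} (p : list V) x : pfirst (rev p) x -> plast p x.
Proof. intros H. rewrite <- (rev_involutive p). apply plast_rev; auto. Qed.

Lemma plast_rev_inv {V} (p : list V) x : plast (rev p) x -> pfirst p x.
Proof. intros H. rewrite <- (rev_involutive p). apply pfirst_rev; auto. Qed.

Lemma rev_geo {V} (adj : V -> V -> Prop) p : geodesic adj p -> geodesic (fl adj) (rev p).
Proof.
  intros [Hw Hm]. split; [apply rev_walk; auto|].
  intros x y q Hx Hy Hq Hqx Hqy. rewrite plen_rev. rewrite <- (plen_rev q).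
  apply (Hm y x); auto using pfirst_rev_inv, plast_rev_inv, pfirst_rev, plast_rev, rev_walk'.
Qed.

Lemma rev_pconcat {V} (p q : list V) y : plast p y -> pfirst q y ->
  rev (pconcat p q) = pconcat (rev q) (rev p).
Proof.
  intros [A ->] [B ->]. unfold pconcat. simpl. rewrite !rev_app_distr. simpl.
  rewrite <- app_assoc. reflexivity.
Qed.

Lemma rev_tri {V} (adj : V -> V -> Prop) p q r : geo_triangle adj p q r ->
  geo_triangle (fl adj) (rev q) (rev p) (rev r).
Proof.
  intros (Gp & Gq & Gr & [y [Hpy Hqy]] & [x [z (Hx1 & Hrx & Hz1 & Hrz)]]).
  split; [apply rev_geo; auto|]. split; [apply rev_geo; auto|]. split; [apply rev_geo; auto|].
  split. { exists y; split; [apply plast_rev|apply pfirst_rev]; auto. }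
  exists z, x. rewrite <- (rev_pconcat p q y) by auto.
  split; [|split; [|split]]; auto using pfirst_rev, plast_rev.
Qed.

Lemma dist_rev {V} (adj : V -> V -> Prop) x y d : dist_leR adj x y d -> dist_leR (fl adj) y x d.
Proof.
  intros [n [[p (H1&H2&H3&H4)] Hn]]. exists n; split; auto. exists (rev p).
  split; [apply rev_walk; auto|]. split; [apply pfirst_rev; auto|]. split; [apply plast_rev; auto|].
  rewrite plen_rev; auto.
Qed.

Lemma rev_sh {V} (adj : V -> V -> Prop) d : strongly_hyperbolic adj d ->
  strongly_hyperbolic (fl adj) d.
Proof.
  intros Hh P Q R HT. apply rev_tri in HT. apply Hh in HT.
  destruct HT as [T1 [T2 T3]].
  unfold thin, out_ball_set, in_ball_set in *.
  split; [|split].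
  - intros v Hv. apply in_rev in Hv. destruct (T1 v Hv) as [[w [Hw Hd]]|[w [Hw Hd]]].
    + right. exists w. rewrite <- in_rev in Hw. split; auto. apply dist_rev; auto.
    + left. exists w. rewrite <- in_rev in Hw. split; auto. apply dist_rev; auto.
  - intros v Hv. apply in_rev in Hv. destruct (T3 v Hv) as [[w [Hw Hd]]|[w [Hw Hd]]].
    + right. exists w. rewrite <- in_rev in Hw. split; auto. apply dist_rev; auto.
    + left. exists w. rewrite <- in_rev in Hw. split; auto. apply dist_rev; auto.
  - intros v Hv. apply in_rev in Hv. destruct (T2 v Hv) as [[w [Hw Hd]]|[w [Hw Hd]]].
    + right. exists w. rewrite <- in_rev in Hw. split; auto. apply dist_rev; auto.
    + left. exists w. rewrite <- in_rev in Hw. split; auto. apply dist_rev; auto.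
Qed.

Definition revT {V} (T : list V * list V * list V) : list V * list V * list V :=
  let '(a, b, c) := T in (rev b, rev a, rev c).

Lemma rev_hstep {V} (Ts : list (list V * list V * list V)) w w' :
  (forall a b c, In (a,b,c) Ts -> composable a b) ->
  hstep Ts w w' -> hstep (map revT Ts) (rev w) (rev w').
Proof.
  intros HC H. destruct H as [a b P Q R HI|a b P Q R HI];
  destruct (HC _ _ _ HI) as [y [H1 H2]];
  rewrite !rev_app_distr, (rev_pconcat P Q y H1 H2), <- !app_assoc.
  - apply hstep_down. apply (in_map revT) in HI. exact HI.
  - apply hstep_up. apply (in_map revT) in HI. exact HI.
Qed.

Lemma rev_hom {V} (Ts : list (list V * list V * list V)) w w' :
  (forall a b c, In (a,b,c) Ts -> composable a b) ->
  homotopic Ts w w' -> homotopic (map revT Ts) (rev w) (rev w').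
Proof.
  intros HC H. unfold homotopic in *. induction H.
  - apply rt_step. apply rev_hstep; auto.
  - apply rt_refl.
  - eapply rt_trans; eauto.
Qed.

Theorem lemma5p4 (V : Type) (adj : V -> V -> Prop) (delta : R) :
  0 <= delta -> strongly_hyperbolic adj delta ->
  forall p q r : list V, geo_triangle adj p q r ->
  exists Ts : list (list V * list V * list V),
    length Ts = 5%nat /\
    (forall p' q' r', In (p', q', r') Ts ->
       geo_triangle adj p' q' r' /\
       INR (tsize p' q' r') <= 3 / 4 * INR (tsize p q r) + 2 * delta + 1) /\
    tessellates_triangle Ts p q r.
Proof.
  intros Hd Hh p q r HT.
  destruct (le_lt_dec (plen q) (plen p)) as [Hle|Hlt].
  - apply main_ab; auto.
  - destruct (main_ab (fl adj) delta Hd (rev_sh adj delta Hh) (rev q) (rev p) (rev r)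
                (rev_tri adj p q r HT) ltac:(rewrite !plen_rev; lia)) as [Ts [HL [HTs Htes]]].
    exists (map revT Ts). split; [rewrite length_map; auto|]. split.
    + intros p' q' r' HI. apply in_map_iff in HI. destruct HI as [[[a b] c] [E HI]].
      simpl in E. inversion E; subst. destruct (HTs _ _ _ HI) as [G1 G2].
      split.
      * apply (rev_tri (fl adj)) in G1. exact G1.
      * unfold tsize in *. rewrite !plen_rev in *. rewrite (Nat.add_comm (plen q)) in G2.
        rewrite (Nat.add_comm (plen b)). exact G2.
    + unfold tessellates_triangle in *.
      destruct HT as (_ & _ & _ & [y [Hpy Hqy]] & _).
      apply rev_hom in Htes.
      * rewrite (rev_pconcat (rev q) (rev p) y) in Htes by (apply plast_rev || apply pfirst_rev; auto).
        rewrite !rev_involutive in Htes. exact Htes.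
      * intros a b c HI. destruct (HTs _ _ _ HI) as [(_&_&_&H&_) _]. exact H.
Qed.
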